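(* For every formula $A$ of $\mathbf{L_1}$, if not $\vdash_T A$, then $\dashv_H A$.
   Context: Formulas of $\mathbf{L_1}$: built from atomic formulas $\epsilon ab$ ($a,b$ name variables, possibly equal) with primitive connectives $\vee,\sim$; $\wedge,\supset,\equiv$ defined as usual. Disjunctions may be associated in any way. $\vdash_H A$: $A$ belongs to the smallest set containing all instances of classical propositional tautologies and all formulas $\epsilon ab\supset\epsilon aa$, $(\epsilon ab\wedge\epsilon bc)\supset\epsilon ac$, $(\epsilon ab\wedge\epsilon bb)\supset\epsilon ba$, closed under modus ponens. Positive/negative parts (occurrences): $A$ is a positive part of $A$; if $B\vee C$ is a positive part then $B,C$ are positive parts; if $\sim B$ is a positive part then $B$ is a negative part; if $\sim B$ is a negative part then $B$ is a positive part. $F[B_+]$ ($G[B_-]$) denotes a formula with a specified occurrence of $B$ as positive (negative) part; $F[B_+,C_-]$ etc. denote specified non-overlapping occurrences. Tableaux: reduction rules ($\vee_-$) $G[B\vee C_-]$ $\mapsto$ two branches $G[B\vee C_-]\vee\sim B$, $G[B\vee C_-]\vee\sim C$; ($\epsilon_1$) $G[\epsilon ab_-]\mapsto G[\epsilon ab_-]\vee\sim\epsilon aa$; ($\epsilon_2$) $G[\epsilon ab_-,\epsilon bc_-]\mapsto G[\epsilon ab_-,\epsilon bc_-]\vee\sim\epsilon ac$; ($\epsilon_{3b}$) $G[\epsilon ab_-,\epsilon bb_-]\mapsto G[\epsilon ab_-,\epsilon bb_-]\vee\sim\epsilon ba$. A tableau for $A$ is a finite tree with root $A$ whose non-leaf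 nodes have as children the result of applying one rule. A branch is closed if its last formula has the form $F[B_+,B_-]$; a tableau is closed if all branches are. $\vdash_T A$: $A$ has a closed tableau. Hintikka formula: a formula $H$ such that (1) $H$ is not of the form $F[B_+,B_-]$; (2) if $B\vee C$ is a negative part of $H$ then $B$ or $C$ is; (3) if $\epsilon ab$ is a negative part then so is $\epsilon aa$; (4) if $\epsilon ab,\epsilon bc$ are negative parts then so is $\epsilon ac$; (5) if $\epsilon ab,\epsilon bb$ are negative parts then so is $\epsilon ba$. $\mathbf{HAR}$: fix a name variable $a_0$; $\dashv_H$ is the smallest set such that $\dashv_H\epsilon a_0a_0$; $\dashv_H\sim\epsilon a_0a_0$; if $\vdash_H A\supset B$ and $\dashv_H B$ then $\dashv_H A$; if $\dashv_H A$ and $A$ is obtained from $B$ by uniform substitution of name variables for name variables then $\dashv_H B$; if $A$ is a Hintikka formula that is a disjunction of atomic or negated atomic formulas, $\dashv_H A$, and $\epsilon ab$ is not a negative part of $A$, then $\dashv_H A\vee\epsilon ab$. *)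

(* Defs.v *)
From Stdlib Require Import Bool.

Definition name := nat.

Inductive form : Type :=
| Eps : name -> name -> form
| Or  : form -> form -> form
| Neg : form -> form.

Definition And (A B : form) : form := Neg (Or (Neg A) (Neg B)).
Definition Imp (A B : form) : form := Or (Neg A) B.
Definition Equiv (A B : form) : form := And (Imp A B) (Imp B A).

Fixpoint eval (v : name -> name -> bool) (A : form) : bool :=
  match A with
  | Eps a b => v a b
  | Or B C => eval v B || eval v C
  | Neg B => negb (eval v B)
  end.

Definition taut (A : form) : Prop := forall v, eval v A = true.

Inductive provH : form -> Prop :=
| provH_taut A : taut A -> provH A
| provH_ax1 a b : provH (Imp (Eps a b) (Eps a a))
| provH_ax2 a b c : provH (Imp (And (Eps a b) (Eps b c)) (Eps a c))
| provH_ax3 a b : provH (Imp (And (Eps a b) (Eps b b)) (Eps b a))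
| provH_mp A B : provH (Imp A B) -> provH A -> provH B.

(** Positive / negative parts: pospart B A means "B is a positive part of A"
    (i.e. some occurrence of B in A is a positive part). *)
Inductive pospart : form -> form -> Prop :=
| pos_self A : pospart A A
| pos_orl A B C : pospart (Or B C) A -> pospart B A
| pos_orr A B C : pospart (Or B C) A -> pospart C A
| pos_negneg A B : negpart (Neg B) A -> pospart B A
with negpart : form -> form -> Prop :=
| neg_negpos A B : pospart (Neg B) A -> negpart B A.

Definition closedf (A : form) : Prop :=
  exists B, pospart B A /\ negpart B A.

(** "A has a closed tableau": an inductive derivation tree whose nodes are
    rule applications and whose leaves are closed formulas. *)
Inductive provT : form -> Prop :=
| T_close A : closedf A -> provT A
| T_or A B C : negpart (Or B C) A ->
    provT (Or A (Neg B)) -> provT (Or A (Neg C)) -> provT A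
| T_eps1 A a b : negpart (Eps a b) A ->
    provT (Or A (Neg (Eps a a))) -> provT A
| T_eps2 A a b c : negpart (Eps a b) A -> negpart (Eps b c) A ->
    provT (Or A (Neg (Eps a c))) -> provT A
| T_eps3b A a b : negpart (Eps a b) A -> negpart (Eps b b) A ->
    provT (Or A (Neg (Eps b a))) -> provT A.

Definition hintikka (H : form) : Prop :=
  ~ closedf H /\
  (forall B C, negpart (Or B C) H -> negpart B H \/ negpart C H) /\
  (forall a b, negpart (Eps a b) H -> negpart (Eps a a) H) /\
  (forall a b c, negpart (Eps a b) H -> negpart (Eps b c) H ->
                 negpart (Eps a c) H) /\
  (forall a b, negpart (Eps a b) H -> negpart (Eps b b) H ->
               negpart (Eps b a) H).

Inductive litdisj : form -> Prop :=
| ld_atom a b : litdisj (Eps a b)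
| ld_natom a b : litdisj (Neg (Eps a b))
| ld_or A B : litdisj A -> litdisj B -> litdisj (Or A B).

Fixpoint subst (s : name -> name) (A : form) : form :=
  match A with
  | Eps a b => Eps (s a) (s b)
  | Or B C => Or (subst s B) (subst s C)
  | Neg B => Neg (subst s B)
  end.

Inductive rejH (a0 : name) : form -> Prop :=
| R_ax1 : rejH a0 (Eps a0 a0)
| R_ax2 : rejH a0 (Neg (Eps a0 a0))
| R_mp A B : provH (Imp A B) -> rejH a0 B -> rejH a0 A
| R_subst A B s : rejH a0 A -> A = subst s B -> rejH a0 B
| R_hint A a b : hintikka A -> litdisj A -> rejH a0 A ->
    ~ negpart (Eps a b) A -> rejH a0 (Or A (Eps a b)).

(* Main.v *)
Require Import Defs.
From Stdlib Require Import Bool List Arith Lia Classical ClassicalEpsilon Wf_nat.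
Import ListNotations.

Inductive gpart (q : bool) : bool -> form -> form -> Prop :=
| g_self R : gpart q q R R
| g_orl R B C : gpart q true (Or B C) R -> gpart q true B R
| g_orr R B C : gpart q true (Or B C) R -> gpart q true C R
| g_neg R B : gpart q true (Neg B) R -> gpart q false B R
| g_negneg R B : gpart q false (Neg B) R -> gpart q true B R.

Scheme pos_mut := Induction for pospart Sort Prop
with neg_mut := Induction for negpart Sort Prop.

Lemma to_g : (forall Z R, pospart Z R -> gpart true true Z R) /\
             (forall Z R, negpart Z R -> gpart true false Z R).
Proof.
  split;
  [apply (pos_mut (fun Z R _ => gpart true true Z R) (fun Z R _ => gpart true false Z R))
  |apply (neg_mut (fun Z R _ => gpart true true Z R) (fun Z R _ => gpart true false Z R))];
  intros; eauto using gpart.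
Qed.

Lemma from_g q p Z R : gpart q p Z R -> q = true ->
  (p = true -> pospart Z R) /\ (p = false -> negpart Z R).
Proof.
  induction 1; intros Hq; subst; split; intros Hp; try discriminate.
  - constructor.
  - apply pos_orl with C. apply IHgpart; auto.
  - apply pos_orr with B. apply IHgpart; auto.
  - apply neg_negpos. apply IHgpart; auto.
  - apply pos_negneg. apply IHgpart; auto.
Qed.

Lemma pos_iff Z R : pospart Z R <-> gpart true true Z R.
Proof. split. apply to_g. intros H; apply (from_g _ _ _ _ H); auto. Qed.
Lemma neg_iff Z R : negpart Z R <-> gpart true false Z R.
Proof. split. apply to_g. intros H; apply (from_g _ _ _ _ H); auto. Qed.

Lemma g_decomp q p Z R : gpart q p Z R ->
  match R with
  | Eps a b => Z = R /\ p = q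
  | Or X Y => (Z = R /\ p = q) \/ (q = true /\ (gpart true p Z X \/ gpart true p Z Y))
  | Neg X => (Z = R /\ p = q) \/ gpart (negb q) p Z X
  end.
Proof.
  induction 1.
  - destruct R; auto.
  - destruct R as [a b|X Y|X].
    + destruct IHgpart; discriminate.
    + destruct IHgpart as [[E Hq]|[Hq [H'|H']]].
      * injection E; intros; subst. right; split; auto. left; constructor.
      * right; split; auto; left; eauto using gpart.
      * right; split; auto; right; eauto using gpart.
    + destruct IHgpart as [[E Hq]|H']; [discriminate| right; eauto using gpart].
  - destruct R as [a b|X Y|X].
    + destruct IHgpart; discriminate.
    + destruct IHgpart as [[E Hq]|[Hq [H'|H']]].
      * injection E; intros; subst. right; split; auto. right; constructor.
      * right; split; auto; left; eauto using gpart.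
      * right; split; auto; right; eauto using gpart.
    + destruct IHgpart as [[E Hq]|H']; [discriminate| right; eauto using gpart].
  - destruct R as [a b|X Y|X].
    + destruct IHgpart; discriminate.
    + destruct IHgpart as [[E Hq]|[Hq [H'|H']]]; [discriminate| |];
      right; split; auto; [left|right]; eauto using gpart.
    + destruct IHgpart as [[E Hq]|H'].
      * injection E; intros; subst. right; constructor.
      * right; eauto using gpart.
  - destruct R as [a b|X Y|X].
    + destruct IHgpart; discriminate.
    + destruct IHgpart as [[E Hq]|[Hq [H'|H']]]; [discriminate| |];
      right; split; auto; [left|right]; eauto using gpart.
    + destruct IHgpart as [[E Hq]|H'].
      * injection E; intros; subst. right; constructor.
      * right; eauto using gpart.
Qed.

Lemma g_mono q p Z R Y : gpart q p Z R -> q = true ->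
  gpart true p Z (Or R Y) /\ gpart true p Z (Or Y R).
Proof.
  induction 1; intros Hq; subst.
  - split; [apply g_orl with Y|apply g_orr with Y]; constructor.
  - destruct IHgpart; auto; split; eauto using gpart.
  - destruct IHgpart; auto; split; eauto using gpart.
  - destruct IHgpart; auto; split; eauto using gpart.
  - destruct IHgpart; auto; split; eauto using gpart.
Qed.

Fixpoint subforms (A : form) : list form :=
  A :: match A with Eps _ _ => [] | Or B C => subforms B ++ subforms C | Neg B => subforms B end.
Fixpoint names (A : form) : list name :=
  match A with Eps a b => [a; b] | Or B C => names B ++ names C | Neg B => names B end.
Fixpoint size (A : form) : nat :=
  match A with Eps _ _ => 1 | Or B C => S (size B + size C) | Neg B => S (size B) end.

Lemma subforms_self A : In A (subforms A).
Proof. destruct A; simpl; auto. Qed.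

Lemma subforms_trans Z X Y : In Y (subforms X) -> In X (subforms Z) -> In Y (subforms Z).
Proof.
  induction Z; simpl; intros H1 [E|H2]; subst; auto; try contradiction;
  right; try (apply in_app_or in H2; apply in_or_app; destruct H2); auto.
Qed.

Lemma subforms_size X Y : In Y (subforms X) -> size Y <= size X.
Proof.
  induction X; simpl; intros [E|H]; subst; simpl; try lia; try contradiction.
  - apply in_app_or in H. destruct H as [H|H]; [apply IHX1 in H|apply IHX2 in H]; lia.
  - apply IHX in H; lia.
Qed.

Lemma subforms_names A x y : In (Eps x y) (subforms A) -> In x (names A) /\ In y (names A).
Proof.
  induction A; simpl; intros [E|H].
  - injection E; intros; subst; simpl; auto.
  - contradiction.
  - discriminate.
  - apply in_app_or in H. destruct H as [H|H]; [apply IHA1 in H|apply IHA2 in H];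
    destruct H; split; apply in_or_app; auto.
  - discriminate.
  - auto.
Qed.

Lemma g_sub q p Z R : gpart q p Z R -> In Z (subforms R).
Proof.
  induction 1.
  - apply subforms_self.
  - apply subforms_trans with (Or B C); auto. simpl; right; apply in_or_app; left; apply subforms_self.
  - apply subforms_trans with (Or B C); auto. simpl; right; apply in_or_app; right; apply subforms_self.
  - apply subforms_trans with (Neg B); auto. simpl; right; apply subforms_self.
  - apply subforms_trans with (Neg B); auto. simpl; right; apply subforms_self.
Qed.

Definition allE (l : list name) : list form :=
  map (fun p => Eps (fst p) (snd p)) (list_prod l l).

Lemma in_allE l X : In X (allE l) <-> exists x y, X = Eps x y /\ In x l /\ In y l.
Proof.
  unfold allE. rewrite in_map_iff. split.
  - intros [[x y] [E H]]. apply in_prod_iff in H. simpl in E. eauto.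
  - intros [x [y [E [H1 H2]]]]. exists (x,y). split; auto. apply in_prod_iff; auto.
Qed.

Definition U0 A0 := subforms A0 ++ allE (names A0).

Lemma U0_sub A0 X Y : In X (U0 A0) -> In Y (subforms X) -> In Y (U0 A0).
Proof.
  unfold U0. intros H1 H2. apply in_app_or in H1. apply in_or_app. destruct H1 as [H1|H1].
  - left. eapply subforms_trans; eauto.
  - right. apply in_allE in H1. destruct H1 as [x [y [E [Hx Hy]]]]. subst. simpl in H2.
    destruct H2 as [E|[]]. subst. apply in_allE. eauto.
Qed.

Lemma U0_eps A0 x y : In (Eps x y) (U0 A0) -> In x (names A0) /\ In y (names A0).
Proof.
  unfold U0. intros H1. apply in_app_or in H1. destruct H1 as [H1|H1].
  - apply subforms_names; auto.
  - apply in_allE in H1. destruct H1 as [x' [y' [E [? ?]]]]. injection E; intros; subst; auto.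
Qed.

Lemma U0_epsI A0 x y : In x (names A0) -> In y (names A0) -> In (Eps x y) (U0 A0).
Proof. intros. unfold U0. apply in_or_app. right. apply in_allE. eauto. Qed.

Definition nnp (A X : form) : bool :=
  if excluded_middle_informative (negpart X A) then false else true.
Definition mu A0 A := length (filter (nnp A) (U0 A0)).

Lemma filter_le {T} (f g : T -> bool) l :
  (forall x, In x l -> f x = true -> g x = true) -> length (filter f l) <= length (filter g l).
Proof.
  induction l as [|a l IH]; simpl; intros H. lia.
  assert (IH' := IH (fun x Hx => H x (or_intror Hx))).
  destruct (f a) eqn:Ef.
  - rewrite (H a (or_introl eq_refl) Ef). simpl; lia.
  - destruct (g a); simpl; lia.
Qed.

Lemma filter_lt {T} (f g : T -> bool) l y :
  (forall x, In x l -> f x = true -> g x = true) -> In y l -> g y = true -> f y = false ->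
  length (filter f l) < length (filter g l).
Proof.
  induction l as [|a l IH]; simpl; intros H Hy Hg Hf. contradiction.
  destruct Hy as [<-|Hy].
  - rewrite Hf, Hg. simpl. assert (K := filter_le f g l (fun x Hx => H x (or_intror Hx))). lia.
  - assert (IH' := IH (fun x Hx => H x (or_intror Hx)) Hy Hg Hf).
    destruct (f a) eqn:Ef.
    + rewrite (H a (or_introl eq_refl) Ef). simpl; lia.
    + destruct (g a); simpl; lia.
Qed.

Lemma mu_lt A0 A A' B : (forall X, negpart X A -> negpart X A') -> In B (U0 A0) ->
  negpart B A' -> ~ negpart B A -> mu A0 A' < mu A0 A.
Proof.
  intros Hm HB H1 H2. unfold mu. apply filter_lt with B; auto.
  - intros x _. unfold nnp. destruct (excluded_middle_informative (negpart x A')); try discriminate.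
    destruct (excluded_middle_informative (negpart x A)); auto.
  - unfold nnp. destruct (excluded_middle_informative (negpart B A)); tauto.
  - unfold nnp. destruct (excluded_middle_informative (negpart B A')); tauto.
Qed.

Lemma pos_mono X A Y : pospart X A -> pospart X (Or A Y).
Proof. rewrite !pos_iff. intros H. apply (g_mono _ _ _ _ Y H); auto. Qed.
Lemma neg_mono X A Y : negpart X A -> negpart X (Or A Y).
Proof. rewrite !neg_iff. intros H. apply (g_mono _ _ _ _ Y H); auto. Qed.

Lemma neg_or_neg A B X : negpart X (Or A (Neg B)) -> negpart X A \/ In X (subforms B).
Proof.
  rewrite !neg_iff. intros H. apply g_decomp in H.
  destruct H as [[_ E]|[_ [H|H]]]; [discriminate|auto|].
  apply g_decomp in H. destruct H as [[_ E]|H]; [discriminate|]. right; eapply g_sub; eauto.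
Qed.

Lemma neg_new A B : negpart B (Or A (Neg B)).
Proof. apply neg_negpos. apply pos_orr with A. constructor. Qed.

Lemma sat A0 : forall A, pospart A0 A -> (forall X, negpart X A -> In X (U0 A0)) -> ~ provT A ->
  exists H, hintikka H /\ pospart A0 H.
Proof.
  intros A. induction A as [A IH] using (well_founded_ind (well_founded_ltof form (mu A0))).
  intros HA HU HT.
  assert (child : forall B, In B (U0 A0) -> ~ negpart B A -> ~ provT (Or A (Neg B)) ->
             exists H, hintikka H /\ pospart A0 H).
  { intros B HB HnB HT'. apply (IH (Or A (Neg B))); auto.
    - unfold ltof. apply mu_lt with B; auto using neg_mono, neg_new.
    - apply pos_mono; auto.
    - intros X HX. destruct (neg_or_neg _ _ _ HX) as [h|h]; auto. eapply U0_sub; eauto. }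
  destruct (classic (closedf A)) as [Hc|Hc]. { exfalso; apply HT; constructor; auto. }
  destruct (classic (exists B C, negpart (Or B C) A /\ ~ negpart B A /\ ~ negpart C A))
    as [[B [C [H1 [H2 H3]]]]|N2].
  { assert (HBC := HU _ H1).
    destruct (classic (provT (Or A (Neg B)))) as [P1|P1].
    - destruct (classic (provT (Or A (Neg C)))) as [P2|P2].
      + exfalso; apply HT; eapply T_or; eauto.
      + apply child with C; auto. eapply U0_sub; eauto. simpl. right; apply in_or_app; right; apply subforms_self.
    - apply child with B; auto. eapply U0_sub; eauto. simpl. right; apply in_or_app; left; apply subforms_self. }
  destruct (classic (exists a b, negpart (Eps a b) A /\ ~ negpart (Eps a a) A))
    as [[a [b [H1 H2]]]|N3].
  { apply child with (Eps a a); auto.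
    - apply HU in H1. apply U0_eps in H1. destruct H1. apply U0_epsI; auto.
    - intro P; apply HT; exact (T_eps1 A a b H1 P). }
  destruct (classic (exists a b c, negpart (Eps a b) A /\ negpart (Eps b c) A /\ ~ negpart (Eps a c) A))
    as [[a [b [c [H1 [H2 H3]]]]]|N4].
  { apply child with (Eps a c); auto.
    - apply HU in H1; apply HU in H2. apply U0_eps in H1; apply U0_eps in H2.
      destruct H1, H2. apply U0_epsI; auto.
    - intro P; apply HT; exact (T_eps2 A a b c H1 H2 P). }
  destruct (classic (exists a b, negpart (Eps a b) A /\ negpart (Eps b b) A /\ ~ negpart (Eps b a) A))
    as [[a [b [H1 [H2 H3]]]]|N5].
  { apply child with (Eps b a); auto.
    - apply HU in H1. apply U0_eps in H1. destruct H1. apply U0_epsI; auto.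
    - intro P; apply HT; exact (T_eps3b A a b H1 H2 P). }
  exists A. split; auto.
  split; [auto|]. split; [|split; [|split]].
  - intros B C H. apply NNPP. intro K. apply N2. exists B, C. tauto.
  - intros a b H. apply NNPP. intro K. apply N3. eauto.
  - intros a b c H H'. apply NNPP. intro K. apply N4. eauto 6.
  - intros a b H H'. apply NNPP. intro K. apply N5. eauto 6.
Qed.

Lemma hint_eval Hf v : hintikka Hf ->
  (forall x y, pospart (Eps x y) Hf -> v x y = false) ->
  (forall x y, negpart (Eps x y) Hf -> v x y = true) ->
  forall X, (pospart X Hf -> eval v X = false) /\ (negpart X Hf -> eval v X = true).
Proof.
  intros [_ [H2 _]] Hp Hn X. induction X as [a b|B IHB C IHC|B IHB]; simpl.
  - split; auto.
  - split; intros Hx.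
    + rewrite (proj1 IHB (pos_orl _ _ _ Hx)), (proj1 IHC (pos_orr _ _ _ Hx)). reflexivity.
    + destruct (H2 _ _ Hx) as [h|h]; [rewrite (proj2 IHB h) | rewrite (proj2 IHC h), orb_true_r]; reflexivity.
  - split; intros Hx.
    + rewrite (proj2 IHB (neg_negpos _ _ Hx)); reflexivity.
    + rewrite (proj1 IHB (pos_negneg _ _ Hx)); reflexivity.
Qed.

Definition EP (p : name * name) := Eps (fst p) (snd p).
Fixpoint nd (n : name * name) (r : list (name * name)) : form :=
  match r with [] => Neg (EP n) | m :: r' => Or (Neg (EP n)) (nd m r') end.
Fixpoint addpos (F : form) (P : list (name * name)) : form :=
  match P with [] => F | p :: P' => addpos (Or F (EP p)) P' end.

Lemma nd_neg r : forall n X, negpart X (nd n r) <-> exists p, In p (n :: r) /\ X = EP p.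
Proof.
  induction r as [|m r IH]; intros n X; rewrite neg_iff; simpl; split.
  - intros H. apply g_decomp in H. destruct H as [[_ E]|H]; [discriminate|].
    apply g_decomp in H. destruct H as [E _]. exists n; auto.
  - intros [p [[E|[]] E']]; subst. apply g_neg. constructor.
  - intros H. apply g_decomp in H. destruct H as [[_ E]|[_ [H|H]]]; [discriminate| |].
    + apply g_decomp in H. destruct H as [[_ E]|H]; [discriminate|].
      apply g_decomp in H. destruct H as [E _]. exists n; auto.
    + rewrite <- neg_iff in H. apply IH in H. destruct H as [p [Hp E]]. exists p; simpl in *; auto.
  - intros [p [[E|Hp] E']]; subst.
    + apply g_neg. apply g_orl with (C := nd m r). constructor.
    + assert (K : negpart (EP p) (nd m r)) by (apply IH; eauto).
      rewrite neg_iff in K. apply (g_mono _ _ _ _ (Neg (EP n)) K); auto.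
Qed.

Lemma nd_pos r : forall n a b, ~ pospart (Eps a b) (nd n r).
Proof.
  induction r as [|m r IH]; intros n a b; rewrite pos_iff; simpl; intros H.
  - apply g_decomp in H. destruct H as [[E _]|H]; [discriminate|].
    apply g_decomp in H. destruct H as [_ E]; discriminate.
  - apply g_decomp in H. destruct H as [[E _]|[_ [H|H]]]; [discriminate| |].
    + apply g_decomp in H. destruct H as [[E _]|H]; [discriminate|].
      apply g_decomp in H. destruct H as [_ E]; discriminate.
    + rewrite <- pos_iff in H. eapply IH; eauto.
Qed.

Lemma nd_lit r : forall n, litdisj (nd n r).
Proof. induction r; intros; simpl; repeat constructor; auto. Qed.

Lemma nd_eval v r : forall n, eval v (nd n r) = false ->
  forall p, In p (n :: r) -> v (fst p) (snd p) = true.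
Proof.
  induction r as [|m r IH]; intros n H p Hp; simpl in *.
  - destruct Hp as [<-|[]]. destruct (v (fst n) (snd n)); auto.
  - apply orb_false_iff in H. destruct H as [H1 H2].
    destruct Hp as [<-|Hp].
    + destruct (v (fst n) (snd n)); auto.
    + eapply IH; eauto.
Qed.

Lemma nd_subst v a0 r : forall n, eval v (subst (fun _ => a0) (nd n r)) = negb (v a0 a0).
Proof.
  induction r as [|m r IH]; intros n; simpl; auto. rewrite IH. apply orb_diag.
Qed.

Lemma addpos_eval v P : forall F, eval v (addpos F P) = false ->
  eval v F = false /\ forall p, In p P -> v (fst p) (snd p) = false.
Proof.
  induction P as [|q P IH]; intros F H; simpl in *.
  - split; auto. intros _ [].
  - apply IH in H. destruct H as [H1 H2]. simpl in H1. apply orb_false_iff in H1.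
    destruct H1. split; auto. intros p [<-|Hp]; auto.
Qed.

Lemma negOrE F a b X : negpart X (Or F (Eps a b)) <-> negpart X F.
Proof.
  split; [|apply neg_mono]. rewrite !neg_iff. intros H. apply g_decomp in H.
  destruct H as [[_ E]|[_ [H|H]]]; [discriminate|auto|].
  apply g_decomp in H. destruct H as [_ E]; discriminate.
Qed.

Lemma posOrE F a b X : pospart X (Or F (Eps a b)) ->
  X = Or F (Eps a b) \/ pospart X F \/ X = Eps a b.
Proof.
  rewrite !pos_iff. intros H. apply g_decomp in H.
  destruct H as [[E _]|[_ [H|H]]]; auto.
  apply g_decomp in H. destruct H as [E _]; auto.
Qed.

Lemma hint_add F a b : hintikka F -> ~ negpart (Eps a b) F -> hintikka (Or F (Eps a b)).
Proof.
  intros [H1 [H2 [H3 [H4 H5]]]] Hn. unfold hintikka. repeat setoid_rewrite negOrE.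
  split; [|split; [auto|split; [auto|split; auto]]].
  intros [B [Hp Hq]]. rewrite negOrE in Hq. apply posOrE in Hp.
  destruct Hp as [E|[Hp|E]]; subst.
  - rewrite neg_iff in Hq. apply g_sub in Hq. apply subforms_size in Hq. simpl in Hq. lia.
  - apply H1. exists B; auto.
  - auto.
Qed.

Lemma addpos_rej a0 P : forall F, rejH a0 F -> litdisj F -> hintikka F ->
  (forall p, In p P -> ~ negpart (EP p) F) -> rejH a0 (addpos F P).
Proof.
  induction P as [|p P IH]; intros F H1 H2 H3 H4; simpl; auto.
  apply IH.
  - apply R_hint; auto. apply H4; simpl; auto.
  - constructor; auto. constructor.
  - apply hint_add; auto. apply H4; simpl; auto.
  - intros q Hq. change (EP p) with (Eps (fst p) (snd p)). rewrite negOrE. apply H4; simpl; auto.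
Qed.

Lemma exfilter {T} (Q : T -> Prop) (U : list T) : exists l, forall x, In x l <-> In x U /\ Q x.
Proof.
  induction U as [|a U [l Hl]].
  - exists []. simpl; tauto.
  - destruct (classic (Q a)) as [Ha|Ha].
    + exists (a :: l). intros x. simpl. rewrite Hl. split; [intros [<-|?]|intros [[<-|?] ?]]; tauto.
    + exists l. intros x. simpl. rewrite Hl. split; [tauto|]. intros [[<-|?] ?]; tauto.
Qed.

Theorem corollary3p2 (a0 : name) (A : form) : ~ provT A -> rejH a0 A.
Proof.
  intros HT.
  destruct (sat A A (pos_self A)) as [Hf [Hh HA]]; auto.
  { intros X HX. rewrite neg_iff in HX. apply g_sub in HX. unfold U0. apply in_or_app; auto. }
  destruct (exfilter (fun p => pospart (EP p) Hf) (list_prod (names Hf) (names Hf))) as [P HP].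
  destruct (exfilter (fun p => negpart (EP p) Hf) (list_prod (names Hf) (names Hf))) as [N HN].
  assert (HP' : forall p, In p P <-> pospart (EP p) Hf).
  { intros [x y]. rewrite HP. split; [tauto|]. intros H. split; auto.
    rewrite pos_iff in H. apply g_sub, subforms_names in H. apply in_prod_iff; auto. }
  assert (HN' : forall p, In p N <-> negpart (EP p) Hf).
  { intros [x y]. rewrite HN. split; [tauto|]. intros H. split; auto.
    rewrite neg_iff in H. apply g_sub, subforms_names in H. apply in_prod_iff; auto. }
  clear HP HN.
  destruct Hh as [Hc [Hor [He1 [He2 He3]]]].
  set (base := match N with [] => Eps a0 a0 | n :: r => nd n r end).
  assert (Hb : rejH a0 base /\ litdisj base /\ hintikka base /\
              (forall p, In p P -> ~ negpart (EP p) base) /\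
              (forall v, eval v base = false -> forall p, In p N -> v (fst p) (snd p) = true)).
  { unfold base. destruct N as [|n r] eqn:EN.
    - assert (K : forall X, ~ negpart X (Eps a0 a0)).
      { intros X H. rewrite neg_iff in H. apply g_decomp in H. destruct H; discriminate. }
      split; [constructor|]. split; [constructor|]. split; [|split; [intros; apply K|intros _ _ _ []]].
      split; [intros [B [_ H]]; eapply K; eauto|].
      split; [intros B C H; exfalso; eapply K; eauto|].
      split; [intros a b H; exfalso; eapply K; eauto|].
      split; [intros a b c H; exfalso; eapply K; eauto|].
      intros a b H; exfalso; eapply K; eauto.
    - split.
      { apply R_subst with (A := subst (fun _ => a0) (nd n r)) (s := fun _ => a0); auto.
        apply R_mp with (B := Neg (Eps a0 a0)); [|constructor].
        apply provH_taut. intro v. unfold Imp. simpl. rewrite nd_subst.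
        destruct (v a0 a0); reflexivity. }
      split; [apply nd_lit|].
      assert (K : forall a b, negpart (Eps a b) (nd n r) <-> negpart (Eps a b) Hf).
      { intros a b. rewrite nd_neg. split.
        - intros [p [Hp E]]. rewrite E. apply HN'; auto.
        - intros H. exists (a,b). split; auto. apply (HN' (a,b)); auto. }
      split; [|split].
      + split; [|split; [|split; [|split]]].
        * intros [B [Hp Hq]]. apply nd_neg in Hq. destruct Hq as [p [_ E]]. subst.
          eapply nd_pos; eauto.
        * intros B C H. apply nd_neg in H. destruct H as [p [_ E]]. discriminate.
        * intros a b. rewrite !K. eauto.
        * intros a b c. rewrite !K. eauto.
        * intros a b. rewrite !K. eauto.
      + intros p Hp Hq. apply nd_neg in Hq. destruct Hq as [q [Hq E]].
        apply HN' in Hq. apply HP' in Hp. rewrite E in Hp.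
        apply Hc. exists (EP q). split; [exact Hp|exact Hq].
      + intros v Hv. apply nd_eval; auto. }
  destruct Hb as [Hb1 [Hb2 [Hb3 [Hb4 Hb5]]]].
  apply R_mp with (addpos base P).
  - apply provH_taut. intro v. unfold Imp. simpl.
    destruct (eval v (addpos base P)) eqn:E; [apply orb_true_r|].
    apply addpos_eval in E. destruct E as [E1 E2].
    assert (Hev := hint_eval Hf v (conj Hc (conj Hor (conj He1 (conj He2 He3))))).
    assert (K1 : forall x y, pospart (Eps x y) Hf -> v x y = false).
    { intros x y H. apply (E2 (x,y)). apply HP'. exact H. }
    assert (K2 : forall x y, negpart (Eps x y) Hf -> v x y = true).
    { intros x y H. apply (Hb5 v E1 (x,y)). apply HN'. exact H. }
    rewrite (proj1 (Hev K1 K2 A) HA); auto.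
  - apply addpos_rej; auto.
Qed.
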